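(* For all $m,n\in\mathbb N^+$, the ideal $\langle X^m,Y^n\rangle$ is an atom of $\mathrm{Mon}(R)$.
   Context: Let $K$ be a field, $N\ge2$, $R=K[X_1,\dots,X_N]$, $X=X_1$, $Y=X_2$. $\mathrm{Mon}(R)$ is the monoid of nonzero monomial ideals of $R$ under ideal multiplication, with identity $R$ (its only unit); an atom of $\mathrm{Mon}(R)$ is an $I\ne R$ in $\mathrm{Mon}(R)$ not a product of two elements of $\mathrm{Mon}(R)\setminus\{R\}$. *)

(* Defs.v *)
From mathcomp Require Import all_boot all_algebra.
From mathcomp Require Import multinomials.mpoly.
Set Implicit Arguments. Unset Strict Implicit. Unset Printing Implicit Defensive.
Import GRing.Theory.
Local Open Scope ring_scope.

Section MonIdeals.
Variables (K : fieldType) (N : nat).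
Notation R := {mpoly K[N]}.

Definition is_ideal (I : R -> Prop) : Prop :=
  [/\ I 0, (forall p q, I p -> I q -> I (p + q)) & (forall r p, I p -> I (r * p))].

Definition ideal_gen (S : R -> Prop) : R -> Prop :=
  fun p => forall J, is_ideal J -> (forall s, S s -> J s) -> J p.

Definition is_monomial (p : R) : Prop := exists a : 'X_{1..N}, p = 'X_[a].

Definition monomial_ideal (I : R -> Prop) : Prop :=
  exists S : R -> Prop, (forall s, S s -> is_monomial s) /\
                        (forall p, I p <-> ideal_gen S p).

Definition inMon (I : R -> Prop) : Prop :=
  monomial_ideal I /\ exists p, I p /\ p != 0.

Definition ideal_mul (I J : R -> Prop) : R -> Prop :=
  ideal_gen (fun p => exists a b, [/\ I a, J b & p = a * b]).

Definition ideal_eq (I J : R -> Prop) : Prop := forall p, I p <-> J p.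

Definition unit_ideal : R -> Prop := fun _ => True.

Definition Mon_atom (I : R -> Prop) : Prop :=
  [/\ inMon I, ~ ideal_eq I unit_ideal &
      ~ exists J L, [/\ inMon J, inMon L, ~ ideal_eq J unit_ideal,
                        ~ ideal_eq L unit_ideal & ideal_eq I (ideal_mul J L)]].
End MonIdeals.

(* the variables X = X_1 and Y = X_2 (indices 0 and 1 in 'I_N) *)
Definition varX (N : nat) (hN : (1 < N)%N) : 'I_N := Ordinal (ltnW hN).
Definition varY (N : nat) (hN : (1 < N)%N) : 'I_N := Ordinal hN.

(* Main.v *)
Require Import Defs.
From mathcomp Require Import all_boot all_algebra.
From mathcomp Require Import multinomials.mpoly.
From mathcomp Require Import zify.
Set Implicit Arguments.
Import GRing.Theory.
Local Open Scope ring_scope.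

Section Aux.
Variables (K : fieldType) (N : nat).
Notation R := {mpoly K[N]}.

Lemma gen_ideal (S : R -> Prop) : is_ideal (ideal_gen S).
Proof.
split.
- by move=> J [] .
- move=> p q Hp Hq J HJ HS; case: (HJ) => _ HD _; exact: HD (Hp J HJ HS) (Hq J HJ HS).
- move=> r p Hp J HJ HS; case: (HJ) => _ _ HM; exact: HM (Hp J HJ HS).
Qed.

Lemma gen_sub (S : R -> Prop) s : S s -> ideal_gen S s.
Proof. by move=> Ss J _ HS; apply: HS. Qed.

Lemma supp_ideal (U : 'X_{1..N} -> Prop) :
  (forall v w, U w -> U (v + w)%MM) ->
  is_ideal (fun p : R => forall u, u \in msupp p -> U u).
Proof.
move=> HU; split.
- by move=> u; rewrite mcoeff_msupp mcoeff0 eqxx.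
- move=> p q Hp Hq u /msuppD_le; rewrite mem_cat => /orP [] ; auto.
- move=> r p Hp u /msuppM_le /allpairsP [[v w] /= [Hv Hw ->]].
  exact: HU (Hp _ Hw).
Qed.

Lemma mon_ideal (J : R -> Prop) : monomial_ideal J -> is_ideal J.
Proof.
move=> [S [_ HJ]]; have [H0 HD HM] := gen_ideal S; split.
- by apply/(HJ _).
- by move=> p q /HJ Hp /HJ Hq; apply/(HJ _); apply: HD.
- by move=> r p /HJ Hp; apply/(HJ _); apply: HM.
Qed.

Lemma key (J : R -> Prop) p u : monomial_ideal J -> J p -> u \in msupp p -> J 'X_[u].
Proof.
move=> [S [HS HJ]] Jp Hu; apply/(HJ _).
have Hp : ideal_gen S p by apply/(HJ _).
have [_ _ HM] := gen_ideal S.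
move: u Hu; apply: (Hp (fun p => forall u, u \in msupp p -> ideal_gen S 'X_[u])).
- apply: supp_ideal => v w Hw; rewrite mpolyXD; exact: HM.
- move=> s Ss; case: (HS s Ss) => a Ea; subst s.
  by move=> u; rewrite msuppX inE => /eqP ->; apply: gen_sub.
Qed.

Lemma ideal_all (J : R -> Prop) : is_ideal J -> J 1 -> ideal_eq J (unit_ideal (N:=N) (K:=K)).
Proof. move=> [_ _ HM] J1 p; split => // _; rewrite -[p]mulr1; exact: HM. Qed.

Lemma nz_pos (a : 'X_{1..N}) i : (forall j, j != i -> a j = 0%N) -> a != 0%MM -> (0 < a i)%N.
Proof.
move=> H; apply: contraR; rewrite -leqNgt leqn0 => /eqP H0; apply/eqP/mnmP => j.
rewrite mnm0E; case: (eqVneq j i) => [->|]; [exact: H0| exact: H].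
Qed.

Lemma decomp (i : 'I_N) k (a b c : 'X_{1..N}) : (U_(i) *+ k)%MM = (a + b + c)%MM ->
  [/\ (a i + b i <= k)%N, forall j, j != i -> a j = 0%N & forall j, j != i -> b j = 0%N].
Proof.
move=> E; have Ec j := congr1 (fun t : 'X_{1..N} => t j) E.
split.
- by move: (Ec i); rewrite /= mulmnE mnm1E eqxx !mnmDE; lia.
- by move=> j Hj; move: (Ec j); rewrite /= mulmnE mnm1E eq_sym (negbTE Hj) !mnmDE; lia.
- by move=> j Hj; move: (Ec j); rewrite /= mulmnE mnm1E eq_sym (negbTE Hj) !mnmDE; lia.
Qed.

End Aux.

Theorem theorem4p9 (K : fieldType) (N : nat) (hN : (1 < N)%N) (m n : nat)
  (hm : (0 < m)%N) (hn : (0 < n)%N) :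
  Mon_atom (ideal_gen (fun p : {mpoly K[N]} =>
              p = 'X_(varX hN) ^+ m \/ p = 'X_(varY hN) ^+ n)).
Proof.
set x := varX hN; set y := varY hN.
set G := (fun p : {mpoly K[N]} => p = 'X_x ^+ m \/ p = 'X_y ^+ n).
have xy : x != y by rewrite -(inj_eq val_inj).
have Ix : ideal_gen G 'X_[U_(x) *+ m] by apply: gen_sub; left; rewrite mpolyXn.
have Iy : ideal_gen G 'X_[U_(y) *+ n] by apply: gen_sub; right; rewrite mpolyXn.
have IT : forall p, ideal_gen G p -> forall u, u \in msupp p -> (m <= u x)%N \/ (n <= u y)%N.
  move=> p Hp; apply: (Hp (fun p => forall u, u \in msupp p -> (m <= u x)%N \/ (n <= u y)%N)).
  - apply: supp_ideal => v w [h|h]; [left|right]; rewrite mnmDE; lia.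
  - move=> s [->|->]; rewrite mpolyXn msuppX => u; rewrite inE => /eqP ->.
    + by left; rewrite mulmnE mnm1E eqxx /=; lia.
    + by right; rewrite mulmnE mnm1E eqxx /=; lia.
have monI : monomial_ideal (ideal_gen G).
  exists G; split => // s [->|->]; [exists (U_(x) *+ m)%MM | exists (U_(y) *+ n)%MM];
    by rewrite mpolyXn.
split.
- split => //; exists 'X_[U_(x) *+ m]; split => //.
  by rewrite -msupp_eq0 msuppX.
- move=> h; have /(h _) : unit_ideal (K:=K) (N:=N) 1 by [].
  move/IT => /(_ 0%MM); rewrite -mpolyX0 msuppX inE eqxx => /(_ isT).
  rewrite !mnm0E; case; rewrite leqn0 => /eqP; lia.
- move=> [J [L [mJ mL nJ nL E]]].
  have [Jm _] := mJ; have [Lm _] := mL.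
  have iJ := mon_ideal Jm; have iL := mon_ideal Lm.
  have nJ1 : ~ J 1 by move=> J1; apply: nJ; exact: ideal_all.
  have nL1 : ~ L 1 by move=> L1; apply: nL; exact: ideal_all.
  pose P u := exists a b c, [/\ J 'X_[a], L 'X_[b] & u = (a + b + c)%MM].
  have HP : forall p, ideal_mul J L p -> forall u, u \in msupp p -> P u.
    move=> p Hp; apply: (Hp (fun p => forall u, u \in msupp p -> P u)).
    - apply: supp_ideal => v w [a [b [c [Ha Hb ->]]]].
      exists a, b, (c + v)%MM; split => //; apply/mnmP => i; rewrite !mnmDE; lia.
    - move=> s [a [b [Ja Lb ->]]] u /msuppM_le /allpairsP [[v w] /= [Hv Hw ->]].
      exists v, w, 0%MM; split; [exact: key Jm Ja Hv | exact: key Lm Lb Hw |].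
      by rewrite addm0.
  have nz (Q : {mpoly K[N]} -> Prop) a : ~ Q 1 -> Q 'X_[a] -> a != 0%MM.
    by move=> nQ Qa; apply/eqP => a0; apply: nQ; rewrite -(mpolyX0 _ K) -a0.
  have /E /HP /(_ (U_(x) *+ m)%MM) := Ix; rewrite msuppX inE eqxx => /(_ isT).
  move=> [a [b [c [Ja Lb Ea]]]].
  have [Hx Ha Hb] := @decomp N x m a b c Ea.
  have ax := nz_pos _ _ Ha (nz _ _ nJ1 Ja); have bx := nz_pos _ _ Hb (nz _ _ nL1 Lb).
  have /E /HP /(_ (U_(y) *+ n)%MM) := Iy; rewrite msuppX inE eqxx => /(_ isT).
  move=> [a' [b' [c' [Ja' Lb' Ea']]]].
  have [Hy Ha' Hb'] := @decomp N y n a' b' c' Ea'.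
  have ay := nz_pos _ _ Ha' (nz _ _ nJ1 Ja'); have by' := nz_pos _ _ Hb' (nz _ _ nL1 Lb').
  have : ideal_mul J L 'X_[a + b'].
    apply: gen_sub; exists 'X_[a], 'X_[b']; split => //; exact: mpolyXD.
  move/E/IT => /(_ (a + b')%MM); rewrite msuppX inE eqxx => /(_ isT).
  rewrite !mnmDE (Ha y) 1?eq_sym // (Hb' x) //.
  lia.
Qed.
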